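(* The radical $\mathcal{V}(D)$ of the form $\langle\cdot,\cdot\rangle$ is an ideal of $\mathcal{A}(D)$.
   Context: Let $G$ be a group generated by a conjugacy class $D$ of involutions such that for all $d,e\in D$ the order of $de$ is $1$, $2$ or $3$. Lines of the Fischer space on $D$ are triples $\{d,e,d^e\}$ with $d,e\in D$ non-commuting. $\mathcal{A}(D)$ is the $\mathbb{F}_2$-vector space with basis $D$ (finite subsets of $D$ under symmetric difference), with bilinear product determined by $d*e=d+e+f$ if $\{d,e,f\}$ is a line and $d*e=0$ otherwise. The bilinear form $\langle\cdot,\cdot\rangle$ on $\mathcal{A}(D)$ is determined by $\langle d,e\rangle=1$ if $d,e$ do not commute and $0$ otherwise; $\mathcal{V}(D)=\{u: \langle u,w\rangle=0\ \forall w\}$. *)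

(* Defs.v *)
From HB Require Import structures.
From mathcomp Require Import all_boot finmap.
From mathcomp Require Import monoid.

Set Implicit Arguments.
Unset Strict Implicit.
Unset Printing Implicit Defensive.

Local Open Scope fset_scope.

Section FischerAlgebra.
Variable G : groupType.

Definition gcommute (x y : G) : bool := (x * y == y * x)%g.

Definition has_order (x : G) (n : nat) : Prop :=
  (0 < n)%N /\ (x ^+ n)%g = 1%g /\ forall m, (0 < m < n)%N -> (x ^+ m)%g <> 1%g.

Definition involution (x : G) : Prop := (x ^+ 2)%g = 1%g /\ x <> 1%g.

Definition is_conj_class (D : G -> Prop) : Prop :=
  exists d0 : G, forall x : G, D x <-> exists h : G, x = (d0 ^ h)%g.

(* G is generated by D: every element is a finite product of elements of D
   (D consists of involutions, so inverses are not needed; the empty product is 1). *)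
Definition generates (D : G -> Prop) : Prop :=
  forall g : G, exists s : seq G,
    (forall x, x \in s -> D x) /\ g = foldr (fun x y => (x * y)%g) 1%g s.

Definition orders_123 (D : G -> Prop) : Prop :=
  forall d e, D d -> D e -> exists2 n, n \in [:: 1; 2; 3]%N & has_order (d * e)%g n.

(* Elements of A(D): finite subsets of D (F_2-vectors with basis D). *)
Definition inA (D : G -> Prop) (u : {fset G}) : Prop := forall x, x \in u -> D x.

(* addition in A(D) = symmetric difference *)
Definition symdiff (A B : {fset G}) : {fset G} := (A `\` B) `|` (B `\` A).

Definition vsum (s : seq G) (F : G -> {fset G}) : {fset G} :=
  foldr (fun x acc => symdiff (F x) acc) fset0 s.

(* product of basis elements: d*e = d + e + d^e if {d,e,d^e} is a line
   (i.e. d, e do not commute), and 0 otherwise *)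
Definition bmul (d e : G) : {fset G} :=
  if gcommute d e then fset0
  else symdiff [fset d] (symdiff [fset e] [fset (d ^ e)%g]).

Definition amul (u w : {fset G}) : {fset G} :=
  vsum (enum_fset u) (fun d => vsum (enum_fset w) (fun e => bmul d e)).

(* bilinear form: <d,e> = 1 iff d,e do not commute; value in F_2 as bool *)
Definition aform (u w : {fset G}) : bool :=
  odd (\sum_(d <- enum_fset u) \sum_(e <- enum_fset w) (~~ gcommute d e : nat)).

Definition inV (D : G -> Prop) (u : {fset G}) : Prop :=
  inA D u /\ forall w, inA D w -> aform u w = false.

Definition is_ideal (D : G -> Prop) (I : {fset G} -> Prop) : Prop :=
  (forall u, I u -> inA D u) /\
  I fset0 /\
  (forall u v, I u -> I v -> I (symdiff u v)) /\
  (forall u w, I u -> inA D w -> I (amul u w) /\ I (amul w u)).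

End FischerAlgebra.

(* Main.v *)
Require Import Defs.
From mathcomp Require Import all_boot finmap.
From mathcomp Require Import monoid.

Set Implicit Arguments.
Unset Strict Implicit.
Unset Printing Implicit Defensive.

Local Open Scope fset_scope.

Section Aux.
Variable G : groupType.
Implicit Types (x y z d e f g : G) (A B u w : {fset G}).

Definition bs (s : seq G) (h : G -> bool) := \big[addb/false]_(x <- s) h x.

Lemma comm_sym x y : gcommute x y = gcommute y x.
Proof. by rewrite /gcommute eq_sym. Qed.

Lemma comm_conj x y g : gcommute (x ^ g)%g (y ^ g)%g = gcommute x y.
Proof. by rewrite /gcommute -!conjMg (inj_eq (@conjg_inj _ g)). Qed.

Lemma conj_comm x y : gcommute x y -> (x ^ y)%g = x.
Proof. by move/eqP=> h; rewrite conjgE h mulKg. Qed.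

Lemma conj_invol x y : (y * y = 1)%g -> ((x ^ y) ^ y)%g = x.
Proof. by move=> h; rewrite -conjgM h conjg1. Qed.

Lemma bs_symdiff A B h : bs (symdiff A B) h = bs A h (+) bs B h.
Proof.
rewrite /bs (big_fsetID _ (fun x => x \in A) (symdiff A B)).
rewrite (big_fsetID _ (fun x => x \in B) A) (big_fsetID _ (fun x => x \in A) B).
have e1 : [fset x in symdiff A B | x \in A] =i [fset x in A | x \notin B].
  by move=> x; rewrite /symdiff !inE /=; case: (x \in A); case: (x \in B).
have e2 : [fset x in symdiff A B | x \notin A] =i [fset x in B | x \notin A].
  by move=> x; rewrite /symdiff !inE /=; case: (x \in A); case: (x \in B).
have e3 : [fset x in A | x \in B] =i [fset x in B | x \in A].
  by move=> x; rewrite !inE /=; case: (x \in A); case: (x \in B).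
rewrite (eq_fbigl _ _ e1) (eq_fbigl _ _ e2) (eq_fbigl _ _ e3).
by rewrite addbACA addbb.
Qed.

Lemma bs_fset0 h : bs fset0 h = false.
Proof. by rewrite /bs big_seq_fset0. Qed.

Lemma bs_fset1 y h : bs [fset y] h = h y.
Proof. by rewrite /bs big_seq_fset1. Qed.

Lemma bs_xor (s : seq G) h1 h2 : bs s (fun x => h1 x (+) h2 x) = bs s h1 (+) bs s h2.
Proof. by rewrite /bs big_split. Qed.

Lemma eq_bs (s : seq G) h1 h2 : {in s, h1 =1 h2} -> bs s h1 = bs s h2.
Proof. by move=> H; apply: eq_big_seq. Qed.

Lemma bs_exch (s t : seq G) (h : G -> G -> bool) :
  bs s (fun x => bs t (h x)) = bs t (fun y => bs s (fun x => h x y)).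
Proof. by rewrite /bs; apply: exchange_big. Qed.

Lemma bs_false (s : seq G) : bs s (fun=> false) = false.
Proof. by rewrite /bs big1. Qed.

Lemma bs_vsum (s : seq G) F h : bs (vsum s F) h = bs s (fun x => bs (F x) h).
Proof.
elim: s => [|x s IH] /=; first by rewrite bs_fset0 /bs big_nil.
by rewrite bs_symdiff IH /bs big_cons.
Qed.

Lemma aformE u w : aform u w = bs u (fun d => bs w (fun e => ~~ gcommute d e)).
Proof.
rewrite /aform (big_morph odd oddD (erefl : odd 0 = false)) /bs.
apply: eq_bigr => d _; rewrite (big_morph odd oddD (erefl : odd 0 = false)).
by apply: eq_bigr => e _; rewrite oddb.
Qed.

Lemma aform_symdiff_l A B w : aform (symdiff A B) w = aform A w (+) aform B w.
Proof. by rewrite !aformE bs_symdiff. Qed.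

Lemma aform_vsum_l (s : seq G) F w : aform (vsum s F) w = bs s (fun x => aform (F x) w).
Proof. by rewrite aformE bs_vsum; apply: eq_bs => x _; rewrite aformE. Qed.

Lemma aform_vsum_r u (s : seq G) F : aform u (vsum s F) = bs s (fun x => aform u (F x)).
Proof.
rewrite aformE (eq_bs (h2 := fun d => bs s (fun x => bs (F x) (fun e => ~~ gcommute d e)))).
  by rewrite bs_exch; apply: eq_bs => x _; rewrite aformE.
by move=> d _ /=; rewrite bs_vsum.
Qed.

Lemma aform_split u w : aform u w = bs u (fun d => aform [fset d] w).
Proof. by rewrite aformE; apply: eq_bs => d _; rewrite aformE bs_fset1. Qed.

Lemma aform_bmul_l d e (X : {fset G}) : aform (bmul d e) X =
  bs X (fun f => ~~ gcommute d e && (~~ gcommute d f (+) ~~ gcommute e f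
                                      (+) ~~ gcommute (d ^ e)%g f)).
Proof.
rewrite aformE /bmul; case: ifP => hc /=.
  by rewrite bs_fset0 bs_false.
rewrite !bs_symdiff !bs_fset1 -!bs_xor; apply: eq_bs => f _ /=.
by rewrite addbA.
Qed.

Lemma aform_bmul_r d e f : aform [fset d] (bmul e f) =
  ~~ gcommute e f && (~~ gcommute d e (+) ~~ gcommute d f (+) ~~ gcommute d (e ^ f)%g).
Proof.
rewrite aformE bs_fset1 /bmul; case: ifP => hc /=; first by rewrite bs_fset0.
by rewrite !bs_symdiff !bs_fset1 addbA.
Qed.

Variable D : G -> Prop.
Hypothesis Dconj : forall x g, D x -> D (x ^ g)%g.
Hypothesis Dinv : forall x, D x -> (x * x = 1)%g.
Hypothesis Dbraid : forall x y, D x -> D y -> ~~ gcommute x y -> (x ^ y)%g = (y ^ x)%g.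

Lemma key d e f : D d -> D e -> D f ->
  ~~ gcommute d e && (~~ gcommute d f (+) ~~ gcommute e f (+) ~~ gcommute (d ^ e)%g f) =
  ~~ gcommute e f && (~~ gcommute d e (+) ~~ gcommute d f (+) ~~ gcommute d (e ^ f)%g).
Proof.
move=> Hd He Hf.
case hde: (gcommute d e); case hef: (gcommute e f) => //=.
- have -> : gcommute d (e ^ f)%g = gcommute d f.
    by rewrite Dbraid ?hef // -{1}(conj_comm hde) comm_conj.
  by rewrite addbb.
- have hfe : gcommute f e by rewrite comm_sym.
  have -> : gcommute (d ^ e)%g f = gcommute d f.
    by rewrite -{1}(conj_comm hfe) comm_conj.
  by rewrite addbF addbb.
- have -> : gcommute (d ^ e)%g f = gcommute d (e ^ f)%g.
    by rewrite -(comm_conj _ _ e) conj_invol ?Dinv // (Dbraid Hf He) // comm_sym hef.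
  by case: (gcommute d f); case: (gcommute d (e ^ f)%g).
Qed.

Definition inAD := inA D.

Lemma inA_symdiff A B : inA D A -> inA D B -> inA D (symdiff A B).
Proof.
move=> hA hB x; rewrite /symdiff !inE.
by case/orP => /andP [_ h]; [apply: hA | apply: hB].
Qed.

Lemma inA_vsum (s : seq G) F : (forall y, y \in s -> inA D (F y)) -> inA D (vsum s F).
Proof.
elim: s => [|y s IH] /= H; first by move=> x; rewrite inE.
apply: inA_symdiff; first by apply: H; rewrite inE eqxx.
by apply: IH => z hz; apply: H; rewrite inE hz orbT.
Qed.

Lemma inA_bmul d e : D d -> D e -> inA D (bmul d e).
Proof.
move=> Hd He; rewrite /bmul; case: ifP => _; first by move=> x; rewrite inE.
apply: inA_symdiff; last apply: inA_symdiff; move=> x; rewrite inE => /eqP -> //.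
exact: Dconj.
Qed.

Lemma inA_amul u w : inA D u -> inA D w -> inA D (amul u w).
Proof.
move=> hu hw; apply: inA_vsum => d hd; apply: inA_vsum => e he.
by apply: inA_bmul; [apply: hu | apply: hw].
Qed.

Lemma assoc u w (x : {fset G}) : inA D u -> inA D w -> inA D x ->
  aform (amul u w) x = aform u (amul w x).
Proof.
move=> hu hw hx.
rewrite /amul aform_vsum_l aform_vsum_r.
rewrite (eq_bs (h2 := fun d => bs w (fun e => bs x (fun f =>
   ~~ gcommute e f && (~~ gcommute d e (+) ~~ gcommute d f (+) ~~ gcommute d (e ^ f)%g))))); last first.
  move=> d hd /=; rewrite aform_vsum_l; apply: eq_bs => e he /=.
  rewrite aform_bmul_l; apply: eq_bs => f hf /=.
  by apply: key; [apply: hu | apply: hw | apply: hx].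
rewrite (eq_bs (s := w) (h2 := fun e => bs u (fun d => bs x (fun f =>
   ~~ gcommute e f && (~~ gcommute d e (+) ~~ gcommute d f (+) ~~ gcommute d (e ^ f)%g))))); last first.
  move=> e he /=; rewrite aform_vsum_r bs_exch; apply: eq_bs => f hf /=.
  by rewrite aform_split; apply: eq_bs => d hd; rewrite aform_bmul_r.
by rewrite bs_exch.
Qed.

Lemma amul_sym u w (x : {fset G}) : inA D u -> inA D w ->
  aform (amul w u) x = aform (amul u w) x.
Proof.
move=> hu hw; rewrite /amul !aform_vsum_l.
rewrite (eq_bs (h2 := fun e => bs u (fun d => aform (bmul d e) x))); last first.
  move=> e he /=; rewrite aform_vsum_l; apply: eq_bs => d hd.
  rewrite !aform_bmul_l; apply: eq_bs => f _.
  rewrite (comm_sym e d); case hc: (gcommute d e) => //=.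
  rewrite (Dbraid (hw e he) (hu d hd)); last by rewrite comm_sym hc.
  by rewrite (addbC (~~ gcommute e f)).
rewrite bs_exch; apply: eq_bs => d _; rewrite aform_vsum_l //.
Qed.

End Aux.

Theorem corollary2p2 (G : groupType) (D : G -> Prop) :
  is_conj_class D ->
  (forall d, D d -> involution d) ->
  generates D ->
  orders_123 D ->
  is_ideal D (inV D).
Proof.
move=> [d0 Hcl] Hinv _ H123.
have Dconj : forall x g, D x -> D (x ^ g)%g.
  move=> x g /Hcl [h ->]; apply/Hcl; exists (h * g)%g; by rewrite conjgM.
have Dinv : forall x, D x -> (x * x = 1)%g.
  by move=> x /Hinv [h _]; rewrite -expg2.
have invD : forall x, D x -> (x^-1 = x)%g.
  by move=> x /Dinv /mulg1_eq.
have Dbraid : forall x y, D x -> D y -> ~~ gcommute x y -> (x ^ y)%g = (y ^ x)%g.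
  move=> x y Hx Hy Hc; have [n Hn [_ [Hxy _]]] := H123 x y Hx Hy.
  move: Hn Hxy; rewrite !inE => /or3P [/eqP-> | /eqP-> | /eqP->] Hxy.
  - move: Hxy; rewrite expg1 => /mulg1_eq; rewrite invD // => Exy.
    by move: Hc; rewrite -Exy /gcommute eqxx.
  - move: Hxy; rewrite expg2 => /mulg1_eq; rewrite invgM !invD // => Exy.
    by move: Hc; rewrite /gcommute -Exy eqxx.
  - have : (x * (y * x) * (y * (x * y)) = 1)%g.
      by rewrite -Hxy !expgSS expg1 !mulgA.
    move/mulg1_eq; rewrite !invgM !invD // => E.
    by rewrite !conjgE !invD // -E !mulgA.
split; first by move=> u [].
split.
  split; first by move=> x; rewrite inE.
  by move=> w _; rewrite aformE bs_fset0.
split.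
  move=> u v [hu Hu] [hv Hv]; split; first exact: inA_symdiff.
  by move=> w hw; rewrite aform_symdiff_l Hu // Hv.
move=> u w [hu Hu] hw.
have H1 : inV D (amul u w).
  split; first exact: (inA_amul Dconj).
  move=> x hx; rewrite (assoc Dinv Dbraid) //; apply: Hu.
  exact: (inA_amul Dconj).
split => //; split; first exact: (inA_amul Dconj).
move=> x hx; rewrite (amul_sym Dbraid) //; exact: H1.2.
Qed.
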